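(* Let $p\colon X\to B$ be a Boolean set. Then the map $\alpha\colon X\to X^{\ast\ast}$, $a\mapsto L(a)=\{G\in X^{\ast}: a\in G\}$, together with $\overline{\alpha}\colon B\to B^{\ast\ast}$, $b\mapsto M(b)=\{F\in B^{\ast}: b\in F\}$, is an isomorphism of Boolean sets from $p\colon X\to B$ onto the Boolean set $X^{\ast\ast}\to B^{\ast\ast}$ of compact-open local sections of the dual étalé space $\widetilde p\colon X^{\ast}\to B^{\ast}$.
   Context: Convention: a ''Boolean algebra'' means a generalized Boolean algebra (relatively complemented distributive lattice with $0$). Boolean set: a presheaf of sets $p\colon X\to B$ over a Boolean algebra $B$ (pairwise disjoint $X_e$, restriction maps $x\mapsto x|^e_f$ for $e\ge f$, $|^e_e=\mathrm{id}$, $(x|^e_f)|^f_g=x|^e_g$) with all $X_e\ne\emptyset$, such that under the order $x\le y$ iff $p(x)\le p(y)$ and $x=y|^{p(y)}_{p(x)}$ there is a least element $0$, compatible pairs ($x\wedge y$ exists and $p(x\wedge y)=p(x)\wedge p(y)$) have joins, and $p(x)=0\Rightarrow x=0$. Morphism of Boolean sets: $\varphi$ with Boolean algebra morphism $\overline{\varphi}$, $q\varphi=\overline{\varphi}p$, $\varphi(x|^a_b)=\varphi(x)|^{\overline{\varphi}(a)}_{\overline{\varphi}(b)}$; isomorphism: invertible morphism. Dual étalé space: $X^{\ast}$ = ultrafilters of $(X,\le)$ (maximal proper non-empty down-directed upward-closed subsets) with basis $L(a)$; $B^{\ast}$ = ultrafilters of $B$ with basis $M(b)$; $\widetilde p(G)=p(G)$.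 For an étalé space $(E,r,Z)$ (surjective local homeomorphism, $Z$ Boolean space), its dual Boolean set is $E^{\ast}\to Z^{\ast}$ where $Z^{\ast}$ is the Boolean algebra of compact-open subsets of $Z$, $E^{\ast}$ the compact-open local sections (open sets on which $r$ is injective), $C\mapsto r(C)$, with restriction $C|^A_{A'}=C\cap r^{-1}(A')$. Here $X^{\ast\ast}$, $B^{\ast\ast}$ denote this construction applied to $\widetilde p\colon X^{\ast}\to B^{\ast}$. *)

(* Defs.v *)
From HB Require Import structures.
From mathcomp Require Import all_boot all_order.
From mathcomp Require Import boolp classical_sets.
From Stdlib Require List.
Set Implicit Arguments. Unset Strict Implicit. Unset Printing Implicit Defensive.
Local Open Scope classical_set_scope.

(* Generalized Boolean algebras given by explicit operations on a     *)
(* domain D : set T (so that the algebra of compact-open subsets of a *)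
(* space can be treated uniformly with a cbDistrLatticeType).         *)

Record gba_ops (T : Type) := GbaOps {
  g0 : T;
  gle : T -> T -> Prop;
  gmeet : T -> T -> T;
  gjoin : T -> T -> T;
  gdiff : T -> T -> T }.

Definition is_gba (T : Type) (D : set T) (o : gba_ops T) : Prop :=
  D (g0 o) /\
      (forall a b, D a -> D b ->
         [/\ D (gmeet o a b), D (gjoin o a b) & D (gdiff o a b)]) /\
      (forall a b, D a -> D b -> (gle o a b <-> gmeet o a b = a)) /\
      (forall a b, D a -> D b ->
         gmeet o a b = gmeet o b a /\ gjoin o a b = gjoin o b a) /\
      (forall a b c, D a -> D b -> D c ->
         gmeet o a (gmeet o b c) = gmeet o (gmeet o a b) c /\
         gjoin o a (gjoin o b c) = gjoin o (gjoin o a b) c) /\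
      (forall a b, D a -> D b ->
         gmeet o a (gjoin o a b) = a /\ gjoin o a (gmeet o a b) = a) /\
      (forall a b c, D a -> D b -> D c ->
         gmeet o a (gjoin o b c) = gjoin o (gmeet o a b) (gmeet o a c)) /\
      (forall a, D a -> gle o (g0 o) a) /\
      (forall a b, D a -> D b ->
         gmeet o (gdiff o a b) b = g0 o /\
         gjoin o (gdiff o a b) (gmeet o a b) = a).

Definition gba_morph (T1 T2 : Type) (D1 : set T1) (o1 : gba_ops T1)
    (D2 : set T2) (o2 : gba_ops T2) (f : T1 -> T2) : Prop :=
  [/\ (forall a, D1 a -> D2 (f a)),
      f (g0 o1) = g0 o2 &
      (forall a b, D1 a -> D1 b ->
         [/\ f (gmeet o1 a b) = gmeet o2 (f a) (f b),
             f (gjoin o1 a b) = gjoin o2 (f a) (f b) &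
             f (gdiff o1 a b) = gdiff o2 (f a) (f b)])].

Definition lat_ops (d : Order.disp_t) (B : cbDistrLatticeType d) : gba_ops B :=
  GbaOps (Order.bottom : B) (fun a b : B => (a <= b)%O)
         (@Order.meet d B) (@Order.join d B) (@Order.diff d B).

Definition set_ops (T : Type) : gba_ops (set T) :=
  GbaOps (@set0 T) (@subset T) (@setI T) (@setU T) (@setD T).

(* bres x f is the restriction x|^{p x}_f (meaningful for f <= p x).   *)

Set Strict Implicit.
Record bset := BSet {
  bX : Type;
  bB : Type;
  bDX : set bX;
  bDB : set bB;
  bops : gba_ops bB;
  bp : bX -> bB;
  bres : bX -> bB -> bX }.
Arguments bX : clear implicits. Arguments bB : clear implicits. Arguments bDX : clear implicits. Arguments bDB : clear implicits. Arguments bops : clear implicits. Arguments bp : clear implicits. Arguments bres : clear implicits.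
Unset Strict Implicit.

Definition ble (S : bset) (x y : bX S) : Prop :=
  gle (bops S) (bp S x) (bp S y) /\ x = bres S y (bp S x).

Definition is_glb (S : bset) (x y m : bX S) : Prop :=
  [/\ bDX S m, ble m x, ble m y &
      forall w, bDX S w -> ble w x -> ble w y -> ble w m].

Definition is_lub (S : bset) (x y j : bX S) : Prop :=
  [/\ bDX S j, ble x j, ble y j &
      forall w, bDX S w -> ble x w -> ble y w -> ble j w].

Definition is_boolean_set (S : bset) : Prop :=
  is_gba (bDB S) (bops S) /\
      (forall x, bDX S x -> bDB S (bp S x)) /\
      (forall x f, bDX S x -> bDB S f -> gle (bops S) f (bp S x) ->
         bDX S (bres S x f) /\ bp S (bres S x f) = f) /\
      (forall x, bDX S x -> bres S x (bp S x) = x) /\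
      (forall x f g, bDX S x -> bDB S f -> bDB S g ->
         gle (bops S) g f -> gle (bops S) f (bp S x) ->
         bres S (bres S x f) g = bres S x g) /\
      (forall e, bDB S e -> exists x, bDX S x /\ bp S x = e) /\
      (exists z, [/\ bDX S z, (forall x, bDX S x -> ble z x) &
                     (forall x, bDX S x -> bp S x = g0 (bops S) -> x = z)]) /\
      (* compatible pairs have joins *)
      (forall x y m, bDX S x -> bDX S y -> is_glb x y m ->
         bp S m = gmeet (bops S) (bp S x) (bp S y) ->
         exists j, is_lub x y j).

Definition bs_morph (S T : bset) (phi : bX S -> bX T) (phib : bB S -> bB T) : Prop :=
  [/\ gba_morph (bDB S) (bops S) (bDB T) (bops T) phib,
      (forall x, bDX S x -> bDX T (phi x)),
      (forall x, bDX S x -> bp T (phi x) = phib (bp S x)) &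
      (forall x b, bDX S x -> bDB S b -> gle (bops S) b (bp S x) ->
         phi (bres S x b) = bres T (phi x) (phib b))].

Definition bs_iso (S T : bset) (phi : bX S -> bX T) (phib : bB S -> bB T) : Prop :=
  bs_morph phi phib /\
  exists (psi : bX T -> bX S) (psib : bB T -> bB S),
    [/\ bs_morph psi psib,
        (forall x, bDX S x -> psi (phi x) = x),
        (forall y, bDX T y -> phi (psi y) = y),
        (forall b, bDB S b -> psib (phib b) = b) &
        (forall c, bDB T c -> phib (psib c) = c)].

Definition is_filter (T : Type) (D : set T) (le : T -> T -> Prop) (F : set T) : Prop :=
  [/\ F `<=` D,
      (exists x, F x),
      (exists x, D x /\ ~ F x),
      (forall x y, F x -> F y -> exists z, [/\ F z, le z x & le z y]) &
      (forall x y, F x -> D y -> le x y -> F y)].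

Definition is_ultrafilter (T : Type) (D : set T) (le : T -> T -> Prop) (F : set T) : Prop :=
  is_filter D le F /\ (forall G, is_filter D le G -> F `<=` G -> G = F).

(* topology on the points P generated by the basis (bas i)_{i in DI} *)
Definition open_basis (T I : Type) (P : set T) (DI : set I) (bas : I -> set T)
    (U : set T) : Prop :=
  U `<=` P /\ (forall t, U t -> exists i, [/\ DI i, bas i t & bas i `<=` U]).

Definition compact_in (T : Type) (op : set T -> Prop) (K : set T) : Prop :=
  forall (I : Type) (U : I -> set T), (forall i, op (U i)) ->
    K `<=` [set t | exists i, U i t] ->
    exists s : seq I, K `<=` [set t | exists i, List.In i s /\ U i t].

Section Dual.
Variable S : bset.

Definition Xstar : set (set (bX S)) := is_ultrafilter (bDX S) (@ble S).
Definition Bstar : set (set (bB S)) := is_ultrafilter (bDB S) (gle (bops S)).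

Definition Lset (a : bX S) : set (set (bX S)) := [set G | Xstar G /\ G a].
Definition Mset (b : bB S) : set (set (bB S)) := [set F | Bstar F /\ F b].

Definition ptilde (G : set (bX S)) : set (bB S) := bp S @` G.

Definition Xopen := open_basis Xstar (bDX S) Lset.
Definition Bopen := open_basis Bstar (bDB S) Mset.

Definition Xss (C : set (set (bX S))) : Prop :=
  [/\ Xopen C, compact_in Xopen C &
      (forall G H, C G -> C H -> ptilde G = ptilde H -> G = H)].

Definition Bss (A : set (set (bB S))) : Prop := Bopen A /\ compact_in Bopen A.

Definition dual : bset :=
  @BSet (set (set (bX S))) (set (set (bB S))) Xss Bss (set_ops (set (bB S)))
    (fun C => ptilde @` C)
    (fun C A => C `&` [set G | A (ptilde G)]).

End Dual.

Definition of_lattice (d : Order.disp_t) (B : cbDistrLatticeType d) (X : Type)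
    (p : X -> B) (res : X -> B -> X) : bset :=
  @BSet X B setT setT (lat_ops B) p res.

(* Main.v *)
Require Import Defs.
From mathcomp Require Import all_boot all_order.
From mathcomp Require Import boolp classical_sets.
From Stdlib Require List.
Set Implicit Arguments. Unset Strict Implicit. Unset Printing Implicit Defensive.
Import Order.Theory.
Local Open Scope classical_set_scope.
Local Open Scope order_scope.

Section Main.
Variables (d : Order.disp_t) (B : cbDistrLatticeType d) (X : Type)
    (p : X -> B) (res : X -> B -> X).
Local Notation S := (of_lattice p res).
Hypothesis HS : is_boolean_set S.

Lemma resP x f : f <= p x -> p (res x f) = f.
Proof. case: HS => _ [_ [H _]] fx; by case: (H x f I I fx). Qed.
Lemma res_id x : res x (p x) = x.
Proof. case: HS => _ [_ [_ [H _]]]; exact: H. Qed.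
Lemma res_res x f g : g <= f -> f <= p x -> res (res x f) g = res x g.
Proof. case: HS => _ [_ [_ [_ [H _]]]] gf fx; exact: H. Qed.
Lemma fibre e : exists x, p x = e.
Proof. case: HS => _ [_ [_ [_ [_ [H _]]]]]; case: (H e I) => x [_ hx]; by exists x. Qed.
Lemma zero_uniq x y : p x = \bot -> p y = \bot -> x = y.
Proof.
case: HS => _ [_ [_ [_ [_ [_ [[z [_ _ H]] _]]]]]] hx hy.
by rewrite [x](H x I hx) [y](H y I hy).
Qed.
Lemma lub_ex x y m : is_glb (S:=S) x y m -> p m = p x `&` p y ->
  exists j, is_lub (S:=S) x y j.
Proof. case: HS => _ [_ [_ [_ [_ [_ [_ H]]]]]]; exact: H. Qed.

Definition leX (x y : X) := p x <= p y /\ x = res y (p x).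

Lemma leX_refl x : leX x x.
Proof. by split; rewrite ?res_id ?lexx. Qed.

Lemma leX_trans x y w : leX x y -> leX y w -> leX x w.
Proof.
move=> [h1 e1] [h2 e2]; split; first exact: le_trans h1 h2.
by rewrite {1}e1 {1}e2 res_res.
Qed.

Lemma res_le x f : f <= p x -> leX (res x f) x.
Proof. by move=> fx; split; rewrite resP. Qed.

Lemma glue x y : res x (p x `&` p y) = res y (p x `&` p y) ->
  exists j, [/\ p j = p x `|` p y, res j (p x) = x, res j (p y) = y &
     forall j', p j' = p x `|` p y -> res j' (p x) = x -> res j' (p y) = y -> j' = j].
Proof.
move=> hc; set e := p x `&` p y.
have ex : e <= p x by exact: leIl.
have ey : e <= p y by exact: leIr.
set m := res x e.
have pm : p m = e by rewrite resP.
have glb : is_glb (S:=S) x y m.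
  split=> //.
  - change (leX m x); split; rewrite pm //.
  - change (leX m y); split; rewrite pm // /m hc //.
  move=> w _ [/= wx ewx] [/= wy ewy]; change (leX w m); split; rewrite ?pm.
    by rewrite lexI wx wy.
  by rewrite /m res_res // lexI wx wy.
have [j0 [_ [/= xj exj] [/= yj eyj] H]] := lub_ex glb pm.
have hj : p x `|` p y <= p j0 by rewrite leUx xj yj.
exists (res j0 (p x `|` p y)).
have pj : p (res j0 (p x `|` p y)) = p x `|` p y by rewrite resP.
have rx : res (res j0 (p x `|` p y)) (p x) = x by rewrite res_res ?leUl.
have ry : res (res j0 (p x `|` p y)) (p y) = y by rewrite res_res ?leUr.
have uniq j' : p j' = p x `|` p y -> res j' (p x) = x -> res j' (p y) = y -> j' = j0.
  move=> pj' rx' ry'.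
  have [/= h1 h2] := H j' I (conj (eq_ind _ (fun t => p x <= t) (leUl _ _) _ (esym pj')) (esym rx'))
                             (conj (eq_ind _ (fun t => p y <= t) (leUr _ _) _ (esym pj')) (esym ry')).
  have pe : p j0 = p j' by apply: le_anti; rewrite h1 pj' hj.
  by rewrite h2 pe res_id.
have e0 : res j0 (p x `|` p y) = j0 by apply: uniq.
split=> // j' pj' rx' ry'; rewrite e0; exact: uniq.
Qed.


Lemma extend x b : p x <= b -> exists y, p y = b /\ res y (p x) = x.
Proof.
move=> xb; have [w pw] := fibre (b `\` p x).
have hc : res x (p x `&` p w) = res w (p x `&` p w).
  apply: zero_uniq; rewrite resP ?leIl ?leIr // pw; exact: diffKI.
have [j [pj rx _ _]] := glue hc.
by exists j; split=> //; rewrite pj pw diffKU; apply/join_idPr.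
Qed.

Lemma agree u v f g : p u = p v -> f <= p u -> g <= p u ->
  res u f = res v f -> res u g = res v g -> res u (f `|` g) = res v (f `|` g).
Proof.
move=> puv fu gu ef eg.
have fg : f `|` g <= p u by rewrite leUx fu gu.
have px : p (res u f) = f by rewrite resP.
have py : p (res u g) = g by rewrite resP.
have hc : res (res u f) (p (res u f) `&` p (res u g)) = res (res u g) (p (res u f) `&` p (res u g)).
  by rewrite px py !res_res ?leIl ?leIr.
have [j [_ _ _ U]] := glue hc.
rewrite px py in U.
have fgv : f `|` g <= p v by rewrite -puv.
have E1 : res u (f `|` g) = j.
  apply: U; first by rewrite resP.
    by rewrite res_res ?leUl.
  by rewrite res_res ?leUr.
have E2 : res v (f `|` g) = j.
  apply: U; first by rewrite resP.
    by rewrite res_res ?leUl // ef.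
  by rewrite res_res ?leUr // eg.
by rewrite E1 E2.
Qed.

Definition Bfilter (F : set B) := is_filter setT (fun a b : B => a <= b) F.
Definition Bultra (F : set B) := is_ultrafilter setT (fun a b : B => a <= b) F.

Lemma Bf_up F a b : Bfilter F -> F a -> a <= b -> F b.
Proof. by case=> _ _ _ _ H Fa ab; apply: H Fa I ab. Qed.

Lemma Bf_meet F a b : Bfilter F -> F a -> F b -> F (a `&` b).
Proof.
move=> hF Fa Fb; case: (hF) => _ _ _ H _.
have [z [Fz za zb]] := H a b Fa Fb.
by apply: Bf_up hF Fz _; rewrite lexI za zb.
Qed.

Lemma Bf_bot F : Bfilter F -> ~ F \bot.
Proof.
move=> hF F0; case: (hF) => _ _ [x [_ nFx]] _ _; apply: nFx.
exact: Bf_up hF F0 (le0x _).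
Qed.


Lemma Buf_sep F b : Bultra F -> ~ F b -> exists f, F f /\ f `&` b = \bot.
Proof.
move=> [hF max] nFb; apply: contra_notP nFb => H.
pose F' := [set c | exists f, F f /\ f `&` b <= c].
have FF' : F `<=` F' by move=> c Fc; exists c; split=> //; exact: leIl.
case: (hF) => _ [x0 Fx0] _ _ _.
suff fF' : Bfilter F' by rewrite -(max F' fF' FF'); exists x0; split=> //; exact: leIr.
split=> //.
- by exists x0; apply: FF'.
- exists \bot; split=> // -[f [Ff fb]]; apply: H; exists f; split=> //.
  by apply/eqP; rewrite -lex0 fb.
- move=> x y [f1 [Ff1 h1]] [f2 [Ff2 h2]]; exists (x `&` y); split; rewrite ?leIl ?leIr //.
  exists (f1 `&` f2); split; first exact: Bf_meet.
  rewrite lexI; apply/andP; split.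
    by apply: le_trans h1; rewrite leI2 ?leIl ?lexx.
  by apply: le_trans h2; rewrite leI2 ?leIr ?lexx.
- by move=> x y [f [Ff h]] _ xy; exists f; split=> //; exact: le_trans xy.
Qed.


Lemma Buf_prime F a b : Bultra F -> F (a `|` b) -> F a \/ F b.
Proof.
move=> hU Fab; apply: contra_notP (Bf_bot hU.1) => H.
have [nFa nFb] : ~ F a /\ ~ F b by split=> h; apply: H; [left|right].
have [f1 [Ff1 e1]] := Buf_sep hU nFa.
have [f2 [Ff2 e2]] := Buf_sep hU nFb.
have Ff12 : F (f1 `&` f2) by apply: Bf_meet hU.1 Ff1 Ff2.
have Ff : F ((f1 `&` f2) `&` (a `|` b)) by apply: Bf_meet hU.1 Ff12 Fab.
have E : (f1 `&` f2) `&` (a `|` b) = \bot.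
  rewrite meetUr; apply/eqP; rewrite -lex0 leUx; apply/andP; split.
    by rewrite -e1 leI2 ?leIl ?lexx.
  by rewrite -e2 leI2 ?leIr ?lexx.
by rewrite -E.
Qed.

Lemma ultra_ex (J : set B) e : J \bot -> (forall a b, J b -> a <= b -> J a) ->
  (forall a b, J a -> J b -> J (a `|` b)) -> ~ J e ->
  exists F, [/\ Bultra F, F e & forall c, F c -> ~ J c].
Proof.
move=> J0 Jdown Jjoin nJe.
pose P (A : set B) := [/\ (forall a b, A a -> a <= b -> A b),
   (forall a b, A a -> A b -> A (a `&` b)), (forall c, A c -> ~ J c) &
   (forall c, A c -> A e)].
have [A [PA Amax]] : exists A, P A /\ forall B, A `<` B -> ~ P B.
  apply: Zorn_bigcup => Fm FP Ftot; split.
  - move=> a b [Y FY Ya] ab; exists Y => //; case: (FP Y FY) => H _ _ _; exact: H Ya ab.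
  - move=> a b [Y1 FY1 Y1a] [Y2 FY2 Y2b].
    have [sub|sub] := Ftot Y1 Y2 FY1 FY2.
      exists Y2 => //; case: (FP Y2 FY2) => _ H _ _; exact: (H a b (sub a Y1a) Y2b).
    exists Y1 => //; case: (FP Y1 FY1) => _ H _ _; exact: (H a b Y1a (sub b Y2b)).
  - move=> c [Y FY Yc]; case: (FP Y FY) => _ _ H _; move: (H c Yc); exact.
  - move=> c [Y FY Yc]; exists Y => //; case: (FP Y FY) => _ _ _ H; exact: (H c Yc).
have maxA (B' : set B) : P B' -> A `<=` B' -> B' `<=` A.
  move=> PB AB; apply: contra_notP (fun x => x) => H.
  exact: (Amax B' (conj AB H) PB).
case: PA => Aup Ameet AJ Ae.
have PE : P [set c | e <= c].
  split.
  - move=> a b /= ea ab; exact: le_trans ab.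
  - by move=> a b /= ea eb; rewrite lexI ea eb.
  - by move=> c /= ec Jc; apply: nJe; exact: Jdown Jc ec.
  - by move=> c _ /=.
have {}Ae : A e.
  have [[c Ac]|nA] := pselect (exists c, A c); first exact: Ae Ac.
  apply: (maxA _ PE) => //= c Ac; case: nA; by exists c.
have ext c : (forall f y, A f -> f `&` c <= y -> ~ J y) -> A c.
  move=> H.
  have PAc : P [set y | exists f, A f /\ f `&` c <= y].
    split.
    - by move=> a b [f [Af fa]] ab; exists f; split=> //; exact: le_trans ab.
    - move=> a b [f1 [Af1 h1]] [f2 [Af2 h2]]; exists (f1 `&` f2); split; first exact: Ameet.
      rewrite lexI; apply/andP; split.
        by apply: le_trans h1; rewrite leI2 ?leIl ?lexx.
      by apply: le_trans h2; rewrite leI2 ?leIr ?lexx.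
    - by move=> y [f [Af fy]]; apply: H Af fy.
    - by move=> _ _; exists e; split=> //; exact: leIl.
  apply: (maxA _ PAc); first by move=> f Af; exists f; split=> //; exact: leIl.
  by exists e; split=> //; exact: leIr.
have hF : Bfilter A.
  split=> //.
  - by exists e.
  - by exists \bot; split=> // /AJ.
  - by move=> x y Ax Ay; exists (x `&` y); split; [exact: Ameet | exact: leIl | exact: leIr].
  - by move=> x y Ax _ xy; apply: Aup xy.
exists A; split=> //; split=> // G hG AG.
apply/seteqP; split=> // c Gc.
apply: contra_notP (Bf_bot hG) => nAc.
have [f1 [Af1 Jf1]] : exists f, A f /\ J (f `&` c).
  apply: contra_notP nAc => H; apply: ext => f y Af fy Jy; apply: H; exists f; split=> //.
  exact: Jdown Jy fy.
have [Ac'|nAc'] := pselect (A (f1 `\` c)).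
  have : G ((f1 `\` c) `&` c) by apply: Bf_meet hG _ Gc; apply: AG.
  by rewrite diffIK.
have [f2 [Af2 Jf2]] : exists f, A f /\ J (f `&` (f1 `\` c)).
  apply: contra_notP nAc' => H; apply: ext => f y Af fy Jy; apply: H; exists f; split=> //.
  exact: Jdown Jy fy.
have Ag : A (f1 `&` f2) by apply: Ameet.
case: (AJ _ Ag).
rewrite -(joinIB c (f1 `&` f2)); apply: Jjoin.
  by apply: (Jdown _ _ Jf1); rewrite leI2 ?leIl ?lexx.
apply: (Jdown _ _ Jf2); rewrite lexI; apply/andP; split.
  exact: le_trans (leBx _ _) (leIr _ _).
exact: leBl _ (leIl f1 f2).
Qed.

Lemma ultra_sep a b : ~ (a <= b) -> exists F, [/\ Bultra F, F a & ~ F b].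
Proof.
move=> nab.
have h1 : forall x y : B, y = \bot -> x <= y -> x = \bot.
  by move=> x y -> ; rewrite lex0 => /eqP.
have h2 : forall x y : B, x = \bot -> y = \bot -> x `|` y = \bot.
  by move=> x y -> ->; rewrite joinxx.
have h3 : ~ (a `\` b = \bot) by move=> /eqP; rewrite diff_eq0.
have [F [hU Fe HJ]] := @ultra_ex [set c | c = \bot] (a `\` b) erefl h1 h2 h3.
exists F; split=> //; first by apply: Bf_up hU.1 Fe (leBx _ _).
move=> Fb; have := Bf_meet hU.1 Fe Fb; rewrite diffIK; exact: Bf_bot hU.1.
Qed.

Definition Mb (b : B) : set (set B) := [set F | Bultra F /\ F b].

Lemma M_bot : Mb \bot = set0.
Proof. by apply/seteqP; split=> // F [hU F0]; case: (Bf_bot hU.1 F0). Qed.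

Lemma M_meet a b : Mb (a `&` b) = setI (Mb a) (Mb b).
Proof.
apply/seteqP; split.
  by move=> F [hU Fab]; split; split=> //; apply: Bf_up hU.1 Fab _; rewrite ?leIl ?leIr.
by move=> F [[hU Fa] [_ Fb]]; split=> //; apply: Bf_meet hU.1 Fa Fb.
Qed.

Lemma M_join a b : Mb (a `|` b) = setU (Mb a) (Mb b).
Proof.
apply/seteqP; split.
  by move=> F [hU Fab]; case: (Buf_prime hU Fab) => h; [left|right].
move=> F [[hU Fa]|[hU Fb]]; split=> //; apply: Bf_up hU.1 _ _; eauto; rewrite ?leUl ?leUr //.
Qed.

Lemma M_diff a b : Mb (a `\` b) = setD (Mb a) (Mb b).
Proof.
apply/seteqP; split.
  move=> F [hU Fab]; split; first by split=> //; apply: Bf_up hU.1 Fab (leBx _ _).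
  move=> [_ Fb]; have := Bf_meet hU.1 Fab Fb; rewrite diffIK; exact: Bf_bot hU.1.
move=> F [[hU Fa] nb]; split=> //.
rewrite -(joinBI b a) in Fa; case: (Buf_prime hU Fa) => // h.
by case: nb; split=> //; apply: Bf_up hU.1 h (leIr _ _).
Qed.

Lemma M_le a b : Mb a `<=` Mb b -> a <= b.
Proof.
move=> H; apply: contra_notP (fun x => x) => nab.
have [F [hU Fa nFb]] := ultra_sep nab.
by have [] := H F (conj hU Fa).
Qed.

Lemma M_inj a b : Mb a = Mb b -> a = b.
Proof. by move=> E; apply: le_anti; rewrite !M_le // E. Qed.

Definition Xfilter (G : set X) := is_filter setT leX G.
Definition Xultra (G : set X) := is_ultrafilter setT leX G.

Lemma Xf_up G x y : Xfilter G -> G x -> leX x y -> G y.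
Proof. by case=> _ _ _ _ H Gx xy; apply: H Gx I xy. Qed.

Lemma Xf_dir G x y : Xfilter G -> G x -> G y -> exists w, [/\ G w, leX w x & leX w y].
Proof. by case=> _ _ _ H _; apply: H. Qed.

Lemma zero_le x z : p z = \bot -> leX z x.
Proof.
move=> pz; split; first by rewrite pz le0x.
by apply: zero_uniq; rewrite ?resP pz ?le0x.
Qed.

Lemma Xf_nbot G x : Xfilter G -> G x -> p x <> \bot.
Proof.
move=> hG Gx px; case: (hG) => _ _ [y [_ nGy]] _ _; apply: nGy.
by apply: Xf_up hG Gx _; apply: zero_le.
Qed.

Lemma RM G x y : Xfilter G -> G x -> G y -> p y <= p x -> G (res x (p y)).
Proof.
move=> hG Gx Gy yx; have [w [Gw [wx ewx] [wy ewy]]] := Xf_dir hG Gx Gy.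
apply: Xf_up hG Gw _; split; first by rewrite resP.
by rewrite res_res.
Qed.

Definition germ (a : X) (F : set B) : set X :=
  [set x | exists f, [/\ F f, f <= p x, f <= p a & res x f = res a f]].

Lemma germ_filter F a : Bfilter F -> F (p a) ->
  [/\ Xfilter (germ a F), germ a F a & p @` (germ a F) = F].
Proof.
move=> hF Fa.
have ga : germ a F a by exists (p a); split.
split=> //.
- split=> //.
  + by exists a.
  + have [x0 px0] := fibre \bot; exists x0; split=> // -[f [Ff fx _ _]].
    apply: (Bf_bot hF); apply: Bf_up hF Ff _; by rewrite -px0.
  + move=> x y [f1 [Ff1 f1x f1a e1]] [f2 [Ff2 f2y f2a e2]].
    set f := f1 `&` f2.
    have Ff : F f by apply: Bf_meet.
    have fa : f <= p a by apply: le_trans f1a; exact: leIl.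
    have pz : p (res a f) = f by rewrite resP.
    exists (res a f); split.
    * by exists f; split; rewrite ?pz ?lexx // res_res ?lexx.
    * split; first by rewrite pz; apply: le_trans f1x; exact: leIl.
      by rewrite pz -(res_res (leIl f1 f2) f1x) e1 res_res // leIl.
    * split; first by rewrite pz; apply: le_trans f2y; exact: leIr.
      by rewrite pz -(res_res (leIr _ _ : f <= f2) f2y) e2 res_res // leIr.
  + move=> x y [f [Ff fx fa e]] _ [xy exy]; exists f; split=> //.
      exact: le_trans xy.
    by rewrite -(res_res fx xy) -exy.
- apply/seteqP; split.
    by move=> _ [x [f [Ff fx _ _]] <-]; apply: Bf_up hF Ff fx.
  move=> b Fb; set f := b `&` p a.
  have Ff : F f by apply: Bf_meet.
  have pf : p (res a f) = f by rewrite resP ?leIr.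
  have [y [py ey]] : exists y, p y = b /\ res y (p (res a f)) = res a f.
    by apply: extend; rewrite pf leIl.
  exists y => //; exists f; split=> //.
  + by rewrite py leIl.
  + exact: leIr.
  + by rewrite pf in ey.
Qed.

Lemma germ_mono a F F' : F `<=` F' -> germ a F `<=` germ a F'.
Proof. by move=> FF x [f [Ff h1 h2 h3]]; exists f; split=> //; apply: FF. Qed.

Lemma germ_ultra F a : Bultra F -> F (p a) -> Xultra (germ a F).
Proof.
move=> hU Fa; have [hG ga _] := germ_filter hU.1 Fa.
split=> // G' hG' sub; apply/seteqP; split=> // y G'y.
have G'a : G' a by apply: sub.
have [w [G'w [wy ewy] [wa ewa]]] := Xf_dir hG' G'y G'a.
have [Fw|nFw] := pselect (F (p w)).
  by exists (p w); split=> //; rewrite -ewy -ewa.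
have [f [Ff e]] := Buf_sep hU nFw.
set f' := f `&` p a.
have Ff' : F f' by apply: Bf_meet hU.1 Ff Fa.
have pf : p (res a f') = f' by rewrite resP ?leIr.
have g1 : germ a F (res a f').
  by exists f'; split; rewrite ?pf ?lexx ?leIr // res_res ?lexx ?leIr.
have [w' [G'w' [w'w _] [w'f _]]] := Xf_dir hG' G'w (sub _ g1).
case: (Xf_nbot hG' G'w').
rewrite pf in w'f.
apply/eqP; rewrite -lex0 -e lexI w'w andbT.
by apply: le_trans w'f _; exact: leIl.
Qed.

Lemma Xf_img G : Xfilter G -> Bfilter (p @` G).
Proof.
move=> hG; case: (hG) => _ [x0 Gx0] _ _ _; split=> //.
- by exists (p x0); exists x0.
- exists \bot; split=> // -[x Gx px]; exact: Xf_nbot hG Gx px.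
- move=> _ _ [x Gx <-] [y Gy <-]; have [w [Gw [wx _] [wy _]]] := Xf_dir hG Gx Gy.
  by exists (p w); split=> //; exists w.
- move=> _ b [x Gx <-] _ xb; have [y [py ey]] := extend xb.
  exists y => //; apply: Xf_up hG Gx _; split; rewrite ?py //.
Qed.

Lemma Xf_germ G a : Xfilter G -> G a -> G = germ a (p @` G).
Proof.
move=> hG Ga; apply/seteqP; split.
  move=> x Gx; have [w [Gw [wx ewx] [wa ewa]]] := Xf_dir hG Gx Ga.
  by exists (p w); split; [exists w | | | rewrite -ewx -ewa].
move=> x [_ [[y Gy <-] yx ya e]].
have := RM hG Ga Gy ya; rewrite -e => Gr.
by apply: Xf_up hG Gr _; apply: res_le.
Qed.

Lemma Xu_img G : Xultra G -> Bultra (p @` G).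
Proof.
move=> [hG max]; have hF := Xf_img hG; split=> // F' hF' sub.
case: (hG) => _ [a Ga] _ _ _.
have Fa : F' (p a) by apply: sub; exists a.
have [hg _ e] := germ_filter hF' Fa.
have E : germ a F' = G.
  apply: max => //; rewrite {1}(Xf_germ hG Ga); exact: germ_mono.
by rewrite -e E.
Qed.

Definition Lb (a : X) : set (set X) := [set G | Xultra G /\ G a].
Definition pt (G : set X) : set B := p @` G.

Lemma ptL a : pt @` Lb a = Mb (p a).
Proof.
apply/seteqP; split.
  by move=> _ [G [hU Ga] <-]; split; [exact: Xu_img | exists a].
move=> F [hU Fa]; have [_ ga e] := germ_filter hU.1 Fa.
by exists (germ a F) => //; split=> //; apply: germ_ultra.
Qed.

Lemma L_res a b : b <= p a -> Lb (res a b) = setI (Lb a) [set G | Mb b (pt G)].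
Proof.
move=> ba; apply/seteqP; split.
  move=> G [hU Gr]; split; first by split=> //; apply: Xf_up hU.1 Gr _; apply: res_le.
  by split; [exact: Xu_img | exists (res a b); rewrite ?resP].
move=> G [[hU Ga] [_ [y Gy py]]]; split=> //.
by rewrite -py; apply: RM hU.1 Ga Gy _; rewrite py.
Qed.

Lemma L_local a G H : Lb a G -> Lb a H -> pt G = pt H -> G = H.
Proof.
move=> [hG Ga] [hH Ha] e.
by rewrite (Xf_germ hG.1 Ga) (Xf_germ hH.1 Ha); congr germ.
Qed.

Lemma L_bot z : p z = \bot -> Lb z = set0.
Proof. by move=> pz; apply/seteqP; split=> // G [hU Gz]; case: (Xf_nbot hU.1 Gz). Qed.

Lemma L_glue a1 a2 j : p j = p a1 `|` p a2 -> res j (p a1) = a1 -> res j (p a2) = a2 ->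
  Lb j = setU (Lb a1) (Lb a2).
Proof.
move=> pj r1 r2; apply/seteqP; split.
  move=> G [hU Gj].
  have : pt G (p a1 `|` p a2) by exists j.
  case/(Buf_prime (Xu_img hU)) => -[y Gy py].
    by left; split=> //; rewrite -r1 -py; apply: RM hU.1 Gj Gy _; rewrite py pj leUl.
  by right; split=> //; rewrite -r2 -py; apply: RM hU.1 Gj Gy _; rewrite py pj leUr.
move=> G [[hU Ga]|[hU Ga]]; split=> //; apply: Xf_up hU.1 Ga _; split.
- by rewrite pj leUl.
- by rewrite r1.
- by rewrite pj leUr.
- by rewrite r2.
Qed.

Lemma L_compat C a1 a2 : (forall G H, C G -> C H -> pt G = pt H -> G = H) ->
  Lb a1 `<=` C -> Lb a2 `<=` C ->
  res a1 (p a1 `&` p a2) = res a2 (p a1 `&` p a2).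
Proof.
move=> loc s1 s2; set e := p a1 `&` p a2.
have e1 : e <= p a1 by exact: leIl.
have e2 : e <= p a2 by exact: leIr.
pose J := [set f | f <= e /\ res a1 f = res a2 f].
have [//|nJe] := pselect (J e); first by case.
have J0 : J \bot.
  by split; rewrite ?le0x //; apply: zero_uniq; rewrite resP // le0x.
have Jd : forall x y, J y -> x <= y -> J x.
  move=> x y [ye ey] xy; split; first exact: le_trans ye.
  by rewrite -(res_res xy (le_trans ye e1)) ey res_res // (le_trans ye e2).
have Jj : forall x y, J x -> J y -> J (x `|` y).
  move=> x y [xe ex] [ye ey]; split; first by rewrite leUx xe ye.
  have pu : p (res a1 e) = p (res a2 e) by rewrite !resP.
  have xu : x <= p (res a1 e) by rewrite resP.
  have yu : y <= p (res a1 e) by rewrite resP.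
  have h1 : res (res a1 e) x = res (res a2 e) x by rewrite !res_res.
  have h2 : res (res a1 e) y = res (res a2 e) y by rewrite !res_res.
  have xye : x `|` y <= e by rewrite leUx xe ye.
  by have := agree pu xu yu h1 h2; rewrite !res_res.
have [F [hU Fe FJ]] := ultra_ex J0 Jd Jj nJe.
have F1 : F (p a1) by apply: Bf_up hU.1 Fe e1.
have F2 : F (p a2) by apply: Bf_up hU.1 Fe e2.
have [_ g1 i1] := germ_filter hU.1 F1.
have [_ g2 i2] := germ_filter hU.1 F2.
have E : germ a1 F = germ a2 F.
  apply: loc.
  - by apply: s1; split=> //; apply: germ_ultra.
  - by apply: s2; split=> //; apply: germ_ultra.
  - by rewrite /pt i1 i2.
have : germ a1 F a2 by rewrite E.
move=> [f [Ff f2 f1 ef]]; case: (FJ f Ff); split; first by rewrite lexI f1 f2.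
by rewrite ef.
Qed.

Lemma L_inj a b : Lb a = Lb b -> a = b.
Proof.
move=> E.
have pe : p a = p b by apply: M_inj; rewrite -!ptL E.
have sb : Lb b `<=` Lb a by rewrite E.
have := @L_compat (Lb a) a b (@L_local a) (fun _ h => h) sb.
by rewrite -pe meetxx res_id => h; rewrite {1}h pe res_id.
Qed.

Lemma compact_gen (T : Type) (op : set T -> Prop) (K : set T) (q : T -> set B) (b0 : B) :
  (forall t, K t -> Bultra (q t) /\ q t b0) ->
  (forall F, Bultra F -> F b0 -> exists t, K t /\ q t = F) ->
  (forall U, op U -> forall t, K t -> U t ->
      exists c, q t c /\ forall t', K t' -> q t' c -> U t') ->
  compact_in op K.
Proof.
move=> h1 h2 h3 I U hU cover.
apply: contra_notP (fun x => x) => nfin.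
pose J := [set c | exists s : seq I, forall t, K t -> q t c ->
                     exists i, List.In i s /\ U i t].
have J0 : J \bot.
  by exists [::] => t Kt q0; case: (Bf_bot (h1 t Kt).1.1 q0).
have Jd : forall x y, J y -> x <= y -> J x.
  move=> x y [s hs] xy; exists s => t Kt qx; apply: (hs t Kt).
  exact: Bf_up (h1 t Kt).1.1 qx xy.
have Jj : forall x y, J x -> J y -> J (x `|` y).
  move=> x y [s1 hs1] [s2 hs2]; exists (s1 ++ s2) => t Kt qxy.
  case: (Buf_prime (h1 t Kt).1 qxy) => [qx|qy].
    have [i [si Ui]] := hs1 t Kt qx; exists i; split=> //.
    by apply: List.in_or_app; left.
  have [i [si Ui]] := hs2 t Kt qy; exists i; split=> //.
  by apply: List.in_or_app; right.
have nJ : ~ J b0.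
  move=> [s hs]; apply: nfin; exists s; move=> t0 Kt0; exact: (hs t0 Kt0 (h1 t0 Kt0).2).
have [F [hF Fb FJ]] := ultra_ex J0 Jd Jj nJ.
have [t [Kt qt]] := h2 F hF Fb.
have [i Uit] := cover t Kt.
have [c [qc hc]] := h3 (U i) (hU i) t Kt Uit.
apply: (FJ c); first by rewrite -qt.
exists [:: i] => t' Kt' qc'; exists i; split; first by left.
exact: hc.
Qed.

Lemma M_compact b : compact_in (Bopen (S := S)) (Mb b).
Proof.
apply: (@compact_gen _ _ _ id b).
- by move=> F [].
- by move=> F hF Fb; exists F.
- move=> U [Us Ub] F KF UF; have [c [_ [_ Fc] cU]] := Ub F UF.
  by exists c; split=> // F' [hF' _] F'c; apply: cU.
Qed.

Lemma L_compact a : compact_in (Xopen (S := S)) (Lb a).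
Proof.
apply: (@compact_gen _ _ _ pt (p a)).
- by move=> G [hG Ga]; split; [exact: Xu_img | exists a].
- move=> F hF Fa; have [_ ga e] := germ_filter hF.1 Fa.
  by exists (germ a F); split=> //; split=> //; apply: germ_ultra.
- move=> U [Us Ub] G [hG Ga] UG; have [i [_ [_ Gi] iU]] := Ub G UG.
  have [w [Gw [wa ewa] [wi ewi]]] := Xf_dir hG.1 Ga Gi.
  exists (p w); split; first by exists w.
  move=> G' [hG' G'a] [y G'y py]; apply: iU; split=> //.
  have := RM hG'.1 G'a G'y; rewrite py -ewa => /(_ wa) G'w.
  by apply: Xf_up hG'.1 G'w _; split.
Qed.

Lemma M_open b : Bopen (S := S) (Mb b).
Proof. split; first by move=> F []. by move=> F Fb; exists b; split. Qed.

Lemma L_open a : Xopen (S := S) (Lb a).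
Proof. split; first by move=> G []. by move=> G Ga; exists a; split. Qed.

Lemma M_surj A : Bss (S := S) A -> exists b, A = Mb b.
Proof.
move=> [[Asub Abas] Acomp].
pose U (c : B) := [set F | Mb c `<=` A /\ Mb c F].
have hU : forall c, Bopen (S := S) (U c).
  move=> c; split; first by move=> F [_ []].
  move=> F [cA MF]; exists c; split=> // F' MF'; by split.
have cover : A `<=` [set F | exists i, U i F].
  by move=> F AF; have [c [_ Mc cA]] := Abas F AF; exists c; split.
have [s hs] := Acomp B U hU cover.
have ind : forall s : seq B, exists b, Mb b = [set F | exists i, List.In i s /\ U i F].
  elim=> [|i s' [b IH]].
    by exists \bot; rewrite M_bot; apply/seteqP; split=> // F [i [[]]].
  have [iA|niA] := pselect (Mb i `<=` A).
    exists (i `|` b); rewrite M_join IH; apply/seteqP; split.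
      move=> F [Fi|[j [js Uj]]]; first by exists i; split; [left|].
      by exists j; split; [right|].
    move=> F [j [[<-|js] Uj]]; first by left; case: Uj.
    by right; exists j.
  exists b; rewrite IH; apply/seteqP; split.
    by move=> F [j [js Uj]]; exists j; split; [right|].
  move=> F [j [[<-|js] Uj]]; first by case: niA; case: Uj.
  by exists j.
have [b Eb] := ind s; exists b; rewrite Eb; apply/seteqP; split=> // F [j [_ [jA Mj]]].
exact: jA.
Qed.

Lemma L_surj C : Xss (S := S) C -> exists a, C = Lb a.
Proof.
move=> [[Csub Cbas] Ccomp Cloc].
pose U (c : X) := [set G | Lb c `<=` C /\ Lb c G].
have hU : forall c, Xopen (S := S) (U c).
  move=> c; split; first by move=> G [_ []].
  move=> G [cC LG]; exists c; split=> // G' LG'; by split.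
have cover : C `<=` [set G | exists i, U i G].
  by move=> G CG; have [c [_ Lc cC]] := Cbas G CG; exists c; split.
have [s hs] := Ccomp X U hU cover.
have ind : forall s : seq X, exists a, Lb a `<=` C /\
     Lb a = [set G | exists i, List.In i s /\ U i G].
  elim=> [|i s' [a [aC IH]]].
    have [z pz] := fibre \bot.
    by exists z; rewrite L_bot //; split=> //; apply/seteqP; split=> // F [i [[]]].
  have [iC|niC] := pselect (Lb i `<=` C).
    have [j [pj rj1 rj2 _]] := glue (L_compat Cloc aC iC).
    have Ej := L_glue pj rj1 rj2.
    exists j; split; first by rewrite Ej => G [|]; [apply: aC|apply: iC].
    rewrite Ej IH; apply/seteqP; split.
      move=> F [[j' [js Uj]]|Fi]; last by exists i; split; [left|].
      by exists j'; split; [right|].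
    move=> F [j' [[<-|js] Uj]]; first by right; case: Uj.
    by left; exists j'.
  exists a; split=> //; rewrite IH; apply/seteqP; split.
    by move=> F [j [js Uj]]; exists j; split; [right|].
  move=> F [j [[<-|js] Uj]]; first by case: niC; case: Uj.
  by exists j.
have [a [aC Ea]] := ind s; exists a; apply/seteqP; split=> //.
by move=> G CG; rewrite Ea; exact: hs.
Qed.

Lemma Xss_L a : Xss (S := S) (Lb a).
Proof. split; [exact: L_open | exact: L_compact | exact: L_local]. Qed.

Lemma Bss_M b : Bss (S := S) (Mb b).
Proof. split; [exact: M_open | exact: M_compact]. Qed.

Lemma M_mono a b : a <= b -> Mb a `<=` Mb b.
Proof. by move=> ab F [hU Fa]; split=> //; apply: Bf_up hU.1 Fa ab. Qed.

Local Notation D := (dual S).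

Lemma Lle x y : ble (S := D) (Lb x) (Lb y) <-> leX x y.
Proof.
change (((pt @` Lb x) `<=` (pt @` Lb y)) /\
   Lb x = setI (Lb y) [set G | (pt @` Lb x) (pt G)] <-> leX x y).
rewrite !ptL.
split.
  move=> [h1 h2]; have xy := M_le h1; split=> //.
  by apply: L_inj; rewrite L_res.
move=> [xy e]; split; first exact: M_mono.
by rewrite -L_res // -e.
Qed.

Lemma Bss_iff A : Bss (S := S) A <-> exists b, A = Mb b.
Proof. by split; [exact: M_surj | move=> [b ->]; exact: Bss_M]. Qed.

Lemma Xss_iff C : Xss (S := S) C <-> exists a, C = Lb a.
Proof. by split; [exact: L_surj | move=> [a ->]; exact: Xss_L]. Qed.

Lemma gbaD : is_gba (Bss (S := S)) (set_ops (set B)).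
Proof.
split; first by rewrite /= -M_bot; exact: Bss_M.
split.
  move=> A A' /M_surj[a ->] /M_surj[b ->] /=.
  by rewrite -M_meet -M_join -M_diff; split; exact: Bss_M.
split.
  move=> A A' _ _ /=; split; first by move=> h; apply/seteqP; split=> // x Ax; split=> //; exact: h.
  by move=> <- x [].
split; first by move=> A A' _ _ /=; rewrite setIC setUC.
split; first by move=> A A' A'' _ _ _ /=; rewrite setIA setUA.
split.
  move=> A A' _ _ /=; split; apply/seteqP; split.
  - by move=> x [].
  - by move=> x Ax; split=> //; left.
  - by move=> x [|[]].
  - by move=> x Ax; left.
split; first by move=> A A' A'' _ _ _ /=; rewrite setIUr.
split; first by move=> A _ /= x.
move=> A A' _ _ /=; split; apply/seteqP; split.
- by move=> x [[_ nx] ?].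
- by [].
- by move=> x [[]|[]].
- move=> x Ax; have [h|h] := pselect (A' x); [right|left]; by split.
Qed.

Lemma ptLb a : ptilde (S := S) @` Lb a = Mb (p a).
Proof. exact: ptL. Qed.

Lemma boolD : is_boolean_set D.
Proof.
split; first exact: gbaD.
split.
  by move=> C /L_surj[a ->]; rewrite /= ptLb; exact: Bss_M.
split.
  move=> C A /L_surj[a ->] /M_surj[b ->]; rewrite /= ptLb => /M_le ba.
  change (Xss (S:=S) (setI (Lb a) [set G | Mb b (pt G)]) /\
          ptilde (S:=S) @` (setI (Lb a) [set G | Mb b (pt G)]) = Mb b).
  by rewrite -L_res // ptLb resP //; split=> //; exact: Xss_L.
split.
  move=> C _ /=; apply/seteqP; split; first by move=> G [].
  by move=> G CG; split=> //; exists G.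
split.
  move=> C A A' _ _ _ /= sub _; apply/seteqP; split.
    by move=> G [[CG _] h]; split.
  by move=> G [CG h]; split=> //; split=> //; apply: sub.
split.
  move=> A /M_surj[b ->]; have [a pa] := fibre b.
  by exists (Lb a); split; [exact: Xss_L | rewrite /= ptLb pa].
split.
  have [z pz] := fibre \bot.
  exists (Lb z); split; first exact: Xss_L.
    move=> C /L_surj[a ->]; apply/Lle; exact: zero_le.
  move=> C /L_surj[a ->] /=; rewrite ptLb -M_bot => /M_inj pa.
  by rewrite !L_bot.
move=> C1 C2 m /L_surj[a1 ->] /L_surj[a2 ->] [/L_surj[w ->] w1 w2 wmax].
rewrite /= !ptLb -M_meet => /M_inj pw.
have glb : is_glb (S:=S) a1 a2 w.
  split=> //; try by apply/Lle.
  move=> v _ v1 v2; apply/Lle; apply: wmax; first exact: Xss_L.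
    by apply/Lle.
  by apply/Lle.
have [j [_ j1 j2 jmax]] := lub_ex glb pw.
exists (Lb j); split; first exact: Xss_L.
- by apply/Lle.
- by apply/Lle.
move=> C /L_surj[v ->] h1 h2; apply/Lle; apply: jmax => //.
  by apply/Lle.
by apply/Lle.
Qed.

Lemma isoD : bs_iso (S := S) (T := D) (Lset (S := S)) (Mset (S := S)).
Proof.
have Mmorph : gba_morph (bDB S) (bops S) (bDB D) (bops D) (Mset (S := S)).
  split.
  - by move=> a _; exact: Bss_M.
  - exact: M_bot.
  - by move=> a b _ _; split; [exact: M_meet | exact: M_join | exact: M_diff].
split.
  split=> //.
  - by move=> x _; exact: Xss_L.
  - by move=> x _; exact: ptLb.
  - by move=> x b _ _ bx; exact: L_res.
have [x0 _] := fibre \bot.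
have Hp : forall C, exists a, Xss (S:=S) C -> C = Lb a.
  move=> C; have [/L_surj[a ->]|nC] := pselect (Xss (S:=S) C); first by exists a.
  by exists x0.
have [psi hpsi] := choice Hp.
have Hb : forall A, exists b, Bss (S:=S) A -> A = Mb b.
  move=> A; have [/M_surj[b ->]|nA] := pselect (Bss (S:=S) A); first by exists b.
  by exists \bot.
have [psib hpsib] := choice Hb.
have psiL a : psi (Lb a) = a by apply: L_inj; rewrite -hpsi //; exact: Xss_L.
have psibM b : psib (Mb b) = b by apply: M_inj; rewrite -hpsib //; exact: Bss_M.
exists psi, psib; split.
- split=> //.
  + split=> //.
    * by rewrite /= -M_bot psibM.
    * move=> A A' /M_surj[a ->] /M_surj[b ->]; split.
      - by rewrite /= -M_meet !psibM.
      - by rewrite /= -M_join !psibM.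
      - by rewrite /= -M_diff !psibM.
  + by move=> C /L_surj[a ->]; rewrite /= ptLb psiL psibM.
  + move=> C A /L_surj[a ->] /M_surj[b ->]; rewrite /= ptLb => /M_le ba.
    change (psi (setI (Lb a) [set G | Mb b (pt G)]) = res (psi (Lb a)) (psib (Mb b))).
    by rewrite -L_res // !psiL psibM.
- by move=> x _; exact: psiL.
- by move=> C /L_surj[a ->]; rewrite psiL.
- by move=> b _; exact: psibM.
- by move=> A /M_surj[b ->]; rewrite psibM.
Qed.

End Main.

Theorem proposition3p13 (d : Order.disp_t) (B : cbDistrLatticeType d) (X : Type)
    (p : X -> B) (res : X -> B -> X) :
  is_boolean_set (of_lattice p res) ->
  is_boolean_set (dual (of_lattice p res)) /\
  bs_iso (S := of_lattice p res) (T := dual (of_lattice p res))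
    (Lset (S := of_lattice p res)) (Mset (S := of_lattice p res)).
Proof.
move=> HS; split; [exact: boolD HS | exact: isoD HS].
Qed.
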